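(* Let $\Bbbk$ be a field of characteristic $\neq 2$ and let $L$ be a Lie algebra over $\Bbbk$. Let $U_\perp(L)$ be the universal enveloping Lie tri-algebra of $L$ with respect to the functor that sends a Lie tri-algebra $(A,[\cdot\vdash\cdot],[\cdot\dashv\cdot],[\cdot\perp\cdot])$ to the Lie algebra $(A,[\cdot\perp\cdot])$. Let $\dot L$ be an isomorphic copy of $L$ and $\dot L*L$ the free product of Lie algebras. Then $U_\perp(L)$ is isomorphic, as a linear space, to the ideal of $\dot L*L$ generated by $\dot L$.
   Context: A Lie tri-algebra is a vector space with three bilinear operations $[\cdot\vdash\cdot]$, $[\cdot\dashv\cdot]$, $[\cdot\perp\cdot]$ such that $[a\dashv b]=-[b\vdash a]$, $[a\perp b]=-[b\perp a]$, and for all $x_1,x_2,x_3$: $[[x_1\vdash x_2]\vdash x_3]-[x_1\vdash[x_2\vdash x_3]]+[x_2\vdash[x_1\vdash x_3]]=0$; $[[x_1\perp x_2]\vdash x_3]=[[x_1\vdash x_2]\vdash x_3]$; $[[x_1\vdash x_2]\perp x_3]-[x_1\vdash[x_2\perp x_3]]-[[x_1\vdash x_3]\perp x_2]=0$; $[[x_1\perp x_2]\perp x_3]+[[x_2\perp x_3]\perp x_1]+[[x_3\perp x_1]\perp x_2]=0$. The universal enveloping Lie tri-algebra $U_\perp(L)$ is a Lie tri-algebra together with a Lie algebra homomorphism $L\to(U_\perp(L),[\cdot\perp\cdot])$ through which every Lie algebra homomorphism from $L$ to $(A,[\cdot\perp\cdot])$, $A$ a Lie tri-algebra, factors uniquely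 via a Lie tri-algebra homomorphism. *)

(* Defs.v *)
From HB Require Import structures.
From mathcomp Require Import all_boot all_order all_algebra.
Set Implicit Arguments. Unset Strict Implicit. Unset Printing Implicit Defensive.
Import GRing.Theory.
Local Open Scope ring_scope.

Section Defs.
Variable K : fieldType.

Definition is_linear (U V : lmodType K) (f : U -> V) : Prop :=
  forall (a : K) (x y : U), f (a *: x + y) = a *: f x + f y.

Definition bilinear_op (V : lmodType K) (b : V -> V -> V) : Prop :=
  (forall (a : K) (x y z : V), b (a *: x + y) z = a *: b x z + b y z) /\
  (forall (a : K) (x y z : V), b z (a *: x + y) = a *: b z x + b z y).

Definition is_Lie (V : lmodType K) (br : V -> V -> V) : Prop :=
  [/\ bilinear_op br,
      (forall x, br x x = 0) &
      (forall x y z, br x (br y z) + br y (br z x) + br z (br x y) = 0)].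

Definition is_Lie_hom (U V : lmodType K) (bU : U -> U -> U) (bV : V -> V -> V)
  (f : U -> V) : Prop :=
  is_linear f /\ forall x y, f (bU x y) = bV (f x) (f y).

(* Lie tri-algebra (A, [.|-.] = vd, [.-|.] = dv, [.T.] = pp) *)
Definition is_Lie_tri (A : lmodType K) (vd dv pp : A -> A -> A) : Prop :=
  [/\ bilinear_op vd, bilinear_op dv, bilinear_op pp,
      (forall a b, dv a b = - vd b a) &
      (forall a b, pp a b = - pp b a)] /\
  [/\
(forall x1 x2 x3,
         vd (vd x1 x2) x3 - vd x1 (vd x2 x3) + vd x2 (vd x1 x3) = 0),
      (forall x1 x2 x3, vd (pp x1 x2) x3 = vd (vd x1 x2) x3),
      (forall x1 x2 x3,
         pp (vd x1 x2) x3 - vd x1 (pp x2 x3) - pp (vd x1 x3) x2 = 0) &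
      (forall x1 x2 x3,
         pp (pp x1 x2) x3 + pp (pp x2 x3) x1 + pp (pp x3 x1) x2 = 0)].

Definition is_Lie_tri_hom (A B : lmodType K)
  (vdA dvA ppA : A -> A -> A) (vdB dvB ppB : B -> B -> B) (g : A -> B) : Prop :=
  [/\ is_linear g,
      (forall x y, g (vdA x y) = vdB (g x) (g y)),
      (forall x y, g (dvA x y) = dvB (g x) (g y)) &
      (forall x y, g (ppA x y) = ppB (g x) (g y))].

Definition is_U_perp (L : lmodType K) (brL : L -> L -> L)
  (U : lmodType K) (vd dv pp : U -> U -> U) (iota : L -> U) : Prop :=
  [/\ is_Lie_tri vd dv pp, is_Lie_hom brL pp iota &
      forall (A : lmodType K) (vdA dvA ppA : A -> A -> A) (f : L -> A),
        is_Lie_tri vdA dvA ppA -> is_Lie_hom brL ppA f ->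
        exists g : U -> A,
          [/\ is_Lie_tri_hom vd dv pp vdA dvA ppA g,
              (forall l, g (iota l) = f l) &
              forall g' : U -> A, is_Lie_tri_hom vd dv pp vdA dvA ppA g' ->
                (forall l, g' (iota l) = f l) -> forall u, g' u = g u]].

(* (F, brF) with j1 : L-dot -> F (L-dot an isomorphic copy of L, identified
   with L) and j2 : L -> F is the free product L-dot * L of Lie algebras. *)
Definition is_free_product (L : lmodType K) (brL : L -> L -> L)
  (F : lmodType K) (brF : F -> F -> F) (j1 j2 : L -> F) : Prop :=
  [/\ is_Lie brF, is_Lie_hom brL brF j1, is_Lie_hom brL brF j2 &
      forall (M : lmodType K) (brM : M -> M -> M) (h1 h2 : L -> M),
        is_Lie brM -> is_Lie_hom brL brM h1 -> is_Lie_hom brL brM h2 ->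
        exists h : F -> M,
          [/\ is_Lie_hom brF brM h,
              (forall l, h (j1 l) = h1 l),
              (forall l, h (j2 l) = h2 l) &
              forall h' : F -> M, is_Lie_hom brF brM h' ->
                (forall l, h' (j1 l) = h1 l) -> (forall l, h' (j2 l) = h2 l) ->
                forall x, h' x = h x]].

Definition is_ideal (F : lmodType K) (brF : F -> F -> F) (P : F -> Prop) : Prop :=
  [/\ P 0,
      (forall x y, P x -> P y -> P (x + y)),
      (forall (a : K) x, P x -> P (a *: x)) &
      (forall x y, P y -> P (brF x y))].

Definition gen_ideal (F : lmodType K) (brF : F -> F -> F) (S : F -> Prop)
  (x : F) : Prop :=
  forall P : F -> Prop, is_ideal brF P -> (forall y, S y -> P y) -> P x.

End Defs.

(* Main.v *)
From HB Require Import structures.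
From mathcomp Require Import all_boot all_order all_algebra.
From mathcomp Require Import boolp.
Require Import Defs.
Set Implicit Arguments. Unset Strict Implicit. Unset Printing Implicit Defensive.
Import GRing.Theory.
Local Open Scope ring_scope.

Section SubMod.
Variables (K : fieldType) (V : lmodType K) (P : V -> Prop).
Hypotheses (P0 : P 0) (PD : forall x y, P x -> P y -> P (x + y))
  (PZ : forall (a : K) x, P x -> P (a *: x)).

Definition subT := {x : V | P x}.
HB.instance Definition _ := gen_eqMixin subT.
HB.instance Definition _ := gen_choiceMixin subT.

Lemma subT_inj (x y : subT) : proj1_sig x = proj1_sig y -> x = y.
Proof. case: x y => [x px] [y py] /= exy; subst y; congr exist; exact: Prop_irrelevance. Qed.

Lemma PN x : P x -> P (- x).
Proof. by move=> px; rewrite -scaleN1r; apply: PZ. Qed.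

Definition s0 : subT := exist _ 0 P0.
Definition sadd (x y : subT) : subT := exist _ _ (PD (proj2_sig x) (proj2_sig y)).
Definition sopp (x : subT) : subT := exist _ _ (PN (proj2_sig x)).
Definition sscale (a : K) (x : subT) : subT := exist _ _ (PZ a (proj2_sig x)).

Lemma saddA : associative sadd. Proof. by move=> x y z; apply: subT_inj; rewrite /= addrA. Qed.
Lemma saddC : commutative sadd. Proof. by move=> x y; apply: subT_inj; rewrite /= addrC. Qed.
Lemma sadd0 : left_id s0 sadd. Proof. by move=> x; apply: subT_inj; rewrite /= add0r. Qed.
Lemma saddN : left_inverse s0 sopp sadd. Proof. by move=> x; apply: subT_inj; rewrite /= addNr. Qed.
HB.instance Definition _ := GRing.isZmodule.Build subT saddA saddC sadd0 saddN.
Lemma sscaleA a b v : sscale a (sscale b v) = sscale (a * b) v.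
Proof. by apply: subT_inj; rewrite /= scalerA. Qed.
Lemma sscale1 : left_id 1 sscale. Proof. by move=> x; apply: subT_inj; rewrite /= scale1r. Qed.
Lemma sscaleDr : right_distributive sscale +%R.
Proof. by move=> a x y; apply: subT_inj; rewrite /= scalerDr. Qed.
Lemma sscaleDl v : {morph sscale^~ v: a b / a + b}.
Proof. by move=> a b; apply: subT_inj; rewrite /= scalerDl. Qed.
HB.instance Definition _ := GRing.Zmodule_isLmodule.Build K subT sscaleA sscale1 sscaleDr sscaleDl.

Lemma val_add (x y : subT) : proj1_sig (x + y) = proj1_sig x + proj1_sig y. Proof. by []. Qed.
Lemma val_scale a (x : subT) : proj1_sig (a *: x) = a *: proj1_sig x. Proof. by []. Qed.
Lemma val_zero : proj1_sig (0 : subT) = 0. Proof. by []. Qed.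


Lemma lin_sub (L : lmodType K) (f : L -> V) (hf : is_linear f) (a : K) x y :
  f (a *: x + y) = a *: f x + f y.
Proof. exact: hf. Qed.

Lemma tri_gen (L : lmodType K) (brL : L -> L -> L) (vd dv pp : V -> V -> V) (iota : L -> V)
  (hU : is_U_perp brL vd dv pp iota)
  (Pvd : forall x y, P x -> P y -> P (vd x y))
  (Pdv : forall x y, P x -> P y -> P (dv x y))
  (Ppp : forall x y, P x -> P y -> P (pp x y))
  (Pi : forall l, P (iota l)) : forall u, P u.
Proof.
case: hU => htri hiota huniv.
pose vdS (x y : subT) : subT := exist _ _ (Pvd _ _ (proj2_sig x) (proj2_sig y)).
pose dvS (x y : subT) : subT := exist _ _ (Pdv _ _ (proj2_sig x) (proj2_sig y)).
pose ppS (x y : subT) : subT := exist _ _ (Ppp _ _ (proj2_sig x) (proj2_sig y)).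
pose iS (l : L) : subT := exist _ _ (Pi l).
have triS : is_Lie_tri vdS dvS ppS.
  case: htri => [[[b1 b2] [c1 c2] [d1 d2] e1 e2] [f1 f2 f3 f4]].
  split; split; try split; move=> *; apply: subT_inj => /=; by [].
have homS : is_Lie_hom brL ppS iS.
  case: hiota => h1 h2; split; move=> *; apply: subT_inj => /=; by [].
have [g [[g1 g2 g3 g4] g5 _]] := huniv _ _ _ _ _ triS homS.
have [g0 [_ _ g0u]] := huniv _ _ _ _ _ htri hiota.
have e1 : forall u, proj1_sig (g u) = g0 u.
  apply: g0u; last by move=> l; rewrite g5.
  split.
  - by move=> a x y; rewrite g1.
  - by move=> x y; rewrite g2.
  - by move=> x y; rewrite g3.
  - by move=> x y; rewrite g4.
have e2 : forall u, u = g0 u.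
  by move=> u; apply: (g0u id) => //; split.
by move=> u; have := proj2_sig (g u); rewrite e1 -e2.
Qed.

Lemma lie_gen (L : lmodType K) (brL : L -> L -> L) (brF : V -> V -> V) (j1 j2 : L -> V)
  (hF : is_free_product brL brF j1 j2)
  (Pbr : forall x y, P x -> P y -> P (brF x y))
  (P1 : forall l, P (j1 l)) (P2 : forall l, P (j2 l)) : forall u, P u.
Proof.
case: hF => hLie hj1 hj2 huniv.
pose brS (x y : subT) : subT := exist _ _ (Pbr _ _ (proj2_sig x) (proj2_sig y)).
pose i1 (l : L) : subT := exist _ _ (P1 l).
pose i2 (l : L) : subT := exist _ _ (P2 l).
have LieS : is_Lie brS.
  case: hLie => [[b1 b2] c1 c2].
  split; try split; move=> *; apply: subT_inj => /=; by [].
have hom1 : is_Lie_hom brL brS i1.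
  case: hj1 => h1 h2; split; move=> *; apply: subT_inj => /=; by [].
have hom2 : is_Lie_hom brL brS i2.
  case: hj2 => h1 h2; split; move=> *; apply: subT_inj => /=; by [].
have [g [[g1 g2] g5 g6 _]] := huniv _ _ _ _ LieS hom1 hom2.
have [g0 [_ _ _ g0u]] := huniv _ _ _ _ hLie hj1 hj2.
have e1 : forall u, proj1_sig (g u) = g0 u.
  apply: g0u; first split.
  - by move=> a x y; rewrite g1.
  - by move=> x y; rewrite g2.
  - by move=> l; rewrite g5.
  - by move=> l; rewrite g6.
have e2 : forall u, u = g0 u.
  by move=> u; apply: (g0u id) => //; split.
by move=> u; have := proj2_sig (g u); rewrite e1 -e2.
Qed.
End SubMod.


Section Lin.
Variables (K : fieldType) (U V : lmodType K) (f : U -> V) (hf : is_linear f).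
Lemma lin0 : f 0 = 0.
Proof.
have := hf 1 0 0; rewrite !scale1r addr0 => H.
by apply: (addrI (f 0)); rewrite addr0 -H.
Qed.
Lemma linD x y : f (x + y) = f x + f y.
Proof. by have := hf 1 x y; rewrite !scale1r. Qed.
Lemma linZ a x : f (a *: x) = a *: f x.
Proof. by have := hf a x 0; rewrite !addr0 lin0 addr0. Qed.
Lemma linN x : f (- x) = - f x.
Proof. by rewrite -scaleN1r linZ scaleN1r. Qed.
Lemma linB x y : f (x - y) = f x - f y.
Proof. by rewrite linD linN. Qed.
End Lin.

Section Bil.
Variables (K : fieldType) (V : lmodType K) (br : V -> V -> V) (hb : bilinear_op br).
Lemma linl z : is_linear (br^~ z). Proof. by move=> a x y; apply: hb.1. Qed.
Lemma linr z : is_linear (br z). Proof. by move=> a x y; apply: hb.2. Qed.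
Lemma br0l z : br 0 z = 0. Proof. exact: (lin0 (linl z)). Qed.
Lemma br0r z : br z 0 = 0. Proof. exact: (lin0 (linr z)). Qed.
Lemma brDl x y z : br (x + y) z = br x z + br y z. Proof. exact: (linD (linl z)). Qed.
Lemma brDr x y z : br z (x + y) = br z x + br z y. Proof. exact: (linD (linr z)). Qed.
Lemma brZl a x z : br (a *: x) z = a *: br x z. Proof. exact: (linZ (linl z)). Qed.
Lemma brZr a x z : br z (a *: x) = a *: br z x. Proof. exact: (linZ (linr z)). Qed.
Lemma brNl x z : br (- x) z = - br x z. Proof. exact: (linN (linl z)). Qed.
Lemma brNr x z : br z (- x) = - br z x. Proof. exact: (linN (linr z)). Qed.
Lemma brBl x y z : br (x - y) z = br x z - br y z. Proof. exact: (linB (linl z)). Qed.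
Lemma brBr x y z : br z (x - y) = br z x - br z y. Proof. exact: (linB (linr z)). Qed.
End Bil.

Section LieF.
Variables (K : fieldType) (V : lmodType K) (br : V -> V -> V) (hL : is_Lie br).
Let hb : bilinear_op br. Proof. by case: hL. Qed.
Lemma br_anti x y : br x y = - br y x.
Proof.
case: hL => _ hxx _.
have := hxx (x + y); rewrite (brDl hb) !(brDr hb) !hxx add0r addr0 => /eqP.
by rewrite addr_eq0 => /eqP.
Qed.
Lemma jac1 a b c : br (br a b) c = br a (br b c) - br b (br a c).
Proof.
have [_ _ hj] := hL.
have := hj a b c.
rewrite (br_anti c a) (brNr hb) (br_anti c (br a b)).
by move/eqP; rewrite subr_eq0 => /eqP ->.
Qed.
End LieF.

Lemma hom_comp (K : fieldType) (A B C : lmodType K) (bA : A -> A -> A) (bB : B -> B -> B)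
  (bC : C -> C -> C) (f : A -> B) (g : B -> C) :
  is_Lie_hom bA bB f -> is_Lie_hom bB bC g -> is_Lie_hom bA bC (fun x => g (f x)).
Proof.
case=> f1 f2 [g1 g2]; split; first by move=> a x y; rewrite f1 g1.
by move=> x y; rewrite f2 g2.
Qed.

Lemma two_zero (K : fieldType) (hchar : 2%N \notin [pchar K]) (V : lmodType K) (x : V) :
  x = - x -> x = 0.
Proof.
move=> hx.
have h2 : (2%:R : K) != 0.
  by move: hchar; rewrite inE /=.
have : (2%:R : K) *: x = 0 by rewrite scaler_nat mulr2n {1}hx addNr.
move/(congr1 (fun v => (2%:R : K)^-1 *: v)).
by rewrite scalerA mulVf // scaler0 scale1r.
Qed.

Lemma ac8 (V : zmodType) (A B C D E F G H : V) :
 ((A + B) + (C + D)) - ((E + F) + (G + H)) = ((A - E) + (C - F) - (G - B)) + (D - H).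
Proof.
by rewrite !opprD opprK !addrA [LHS](ACl (1*5*3*6*7*2*4*8)).
Qed.


Lemma addrACB (V : zmodType) (a1 a2 b1 b2 c1 c2 : V) :
  (a1 + a2) + (b1 + b2) - (c1 + c2) = (a1 + b1 - c1) + (a2 + b2 - c2).
Proof. by rewrite opprD (addrACA a1) (addrACA (a1 + b1)). Qed.

Section Semi.
Variables (K : fieldType) (L U : lmodType K) (brL : L -> L -> L) (pp vd : U -> U -> U)
  (iota : L -> U).
Hypotheses (hL : is_Lie brL) (hpp : is_Lie pp) (hvd : bilinear_op vd)
  (hder : forall x y z, vd x (pp y z) = pp (vd x y) z + pp y (vd x z))
  (hcomm : forall x y w, vd (pp x y) w = vd x (vd y w) - vd y (vd x w))
  (hi : is_Lie_hom brL pp iota).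

Let hbL : bilinear_op brL. Proof. by case: hL. Qed.
Let hbp : bilinear_op pp. Proof. by case: hpp. Qed.
Let hil : is_linear iota. Proof. by case: hi. Qed.

Definition Dop l u := vd (iota l) u.
Lemma D0l u : Dop 0 u = 0. Proof. by rewrite /Dop (lin0 hil) (br0l hvd). Qed.
Lemma D0r l : Dop l 0 = 0. Proof. by rewrite /Dop (br0r hvd). Qed.
Lemma Dlin a l l' u : Dop (a *: l + l') u = a *: Dop l u + Dop l' u.
Proof. by rewrite /Dop hil; apply: hvd.1. Qed.
Lemma Dlinr a l u u' : Dop l (a *: u + u') = a *: Dop l u + Dop l u'.
Proof. by rewrite /Dop; apply: hvd.2. Qed.
Lemma Dbr l l' u : Dop (brL l l') u = Dop l (Dop l' u) - Dop l' (Dop l u).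
Proof. by rewrite /Dop hi.2 hcomm. Qed.
Lemma Dder l y z : Dop l (pp y z) = pp (Dop l y) z + pp y (Dop l z).
Proof. exact: hder. Qed.

Lemma pairZD (a : K) (p r : U) (q s : L) : a *: (p, q) + (r, s) = (a *: p + r, a *: q + s).
Proof. by []. Qed.

Definition brM (m1 m2 : U * L) : U * L :=
  (pp m1.1 m2.1 + Dop m1.2 m2.1 - Dop m2.2 m1.1, brL m1.2 m2.2).

Lemma brM_bil : bilinear_op brM.
Proof.
split=> a x y z; rewrite /brM /=.
  rewrite hbp.1 Dlin Dlinr hbL.1 pairZD.
  by rewrite addrACB !(scalerDr, scalerN).
rewrite hbp.2 Dlin Dlinr hbL.2 pairZD.
by rewrite addrACB !(scalerDr, scalerN).
Qed.

Lemma pairD (p r : U) (q s : L) : (p, q) + (r, s) = (p + r, q + s).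
Proof. by []. Qed.
Lemma pair0 : (0 : U * L) = (0, 0). Proof. by []. Qed.

Definition Jm x y z := brM x (brM y z) + brM y (brM z x) + brM z (brM x y).

Lemma JmD x x' y z : Jm (x + x') y z = Jm x y z + Jm x' y z.
Proof.
have hb := brM_bil.
rewrite /Jm (brDl hb) !(brDr hb) (brDl hb) (brDr hb).
by rewrite (addrACA (brM x (brM y z))) (addrACA (brM x (brM y z) + _)).
Qed.

Lemma Jmc x y z : Jm x y z = Jm y z x.
Proof. by rewrite /Jm -addrA addrC. Qed.

Ltac simpM := rewrite /Jm /brM /= ?(br0l hbp, br0r hbp, br0l hbL, br0r hbL, D0l, D0r,
   addr0, add0r, subr0, sub0r, oppr0, pairD, pair0).

Lemma DNr l u : Dop l (- u) = - Dop l u.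
Proof. by rewrite /Dop (brNr hvd). Qed.

Lemma JUUU u1 u2 u3 : Jm (u1, 0) (u2, 0) (u3, 0) = 0.
Proof. by simpM; congr (_, _); case: hpp => _ _ ->. Qed.
Lemma JUUL u1 u2 l : Jm (u1, 0) (u2, 0) (0, l) = 0.
Proof.
simpM; congr (_, _).
rewrite (brNr hbp) Dder (br_anti hpp u2 (Dop l u1)).
by rewrite -opprD (addrC (pp (Dop l u1) u2)) addNr.
Qed.
Lemma JULL u l1 l2 : Jm (u, 0) (0, l1) (0, l2) = 0.
Proof. by simpM; congr (_, _); rewrite Dbr DNr opprB subrK subrr. Qed.
Lemma JLLL l1 l2 l3 : Jm (0, l1) (0, l2) (0, l3) = 0.
Proof. by simpM; congr (_, _); case: hL => _ _ ->. Qed.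

Lemma brM_Lie : is_Lie brM.
Proof.
split; first exact: brM_bil.
  move=> x; rewrite /brM addrK pair0.
  by case: hpp => _ -> _; case: hL => _ -> _.
have JmD2 x y y' z : Jm x (y + y') z = Jm x y z + Jm x y' z.
  by rewrite (Jmc x) JmD -(Jmc x y z) -(Jmc x y' z).
have JmD3 x y z z' : Jm x y (z + z') = Jm x y z + Jm x y z'.
  by rewrite -(Jmc (z + z') x y) JmD (Jmc z x y) (Jmc z' x y).
have c1 u1 u2 l : Jm (u1,0) (0,l) (u2,0) = 0 by rewrite -Jmc JUUL.
have c2 u1 u2 l : Jm (0,l) (u1,0) (u2,0) = 0 by rewrite Jmc JUUL.
have c4 u l1 l2 : Jm (0,l1) (u,0) (0,l2) = 0 by rewrite Jmc JULL.
have c5 u l1 l2 : Jm (0,l1) (0,l2) (u,0) = 0 by rewrite -Jmc JULL.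
have ex (a : U) (b : L) : (a, b) = (a, 0) + (0, b) by rewrite pairD addr0 add0r.
case=> [a1 b1] [a2 b2] [a3 b3].
change (Jm (a1,b1) (a2,b2) (a3,b3) = 0).
rewrite (ex a1 b1) (ex a2 b2) (ex a3 b3) !JmD !JmD2 !JmD3.
by rewrite JUUU JUUL c1 c2 JULL c4 c5 JLLL !addr0.
Qed.

Lemma h1_hom : is_Lie_hom brL brM (fun l => (iota l, 0)).
Proof.
split.
  by move=> a x y; rewrite pairZD hil scaler0 addr0.
by move=> x y; rewrite /brM /= D0l D0l subr0 addr0 (br0l hbL) hi.2.
Qed.
Lemma h2_hom : is_Lie_hom brL brM (fun l => (0, l)).
Proof.
split; first by move=> a x y; rewrite pairZD scaler0 addr0.
by move=> x y; rewrite /brM /= D0r D0r (br0l hbp) subr0 addr0.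
Qed.
Lemma h0_hom (F : lmodType K) (brF : F -> F -> F) (k : F -> L) :
  is_Lie_hom brF brL k -> is_Lie_hom brF brM (fun x => (0, k x)).
Proof.
case=> hk1 hk2; split; first by move=> a x y; rewrite pairZD scaler0 addr0 hk1.
by move=> x y; rewrite /brM /= D0r D0r (br0l hbp) subr0 addr0 hk2.
Qed.
End Semi.

Theorem theorem5p1 (K : fieldType) (hchar : 2%N \notin [pchar K])
  (L : lmodType K) (brL : L -> L -> L) (hL : is_Lie brL)
  (U : lmodType K) (vd dv pp : U -> U -> U) (iota : L -> U)
  (hU : is_U_perp brL vd dv pp iota)
  (F : lmodType K) (brF : F -> F -> F) (j1 j2 : L -> F)
  (hF : is_free_product brL brF j1 j2) :
  exists phi : U -> F,
    [/\ is_linear phi, injective phi &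
        forall y : F, gen_ideal brF (fun z => exists l, z = j1 l) y <->
                      exists u, phi u = y].
Proof.
have hbL : bilinear_op brL by case: hL.
have [htri hiota huniv] := hU.
have [[hbvd hbdv hbpp hdv hppa] [ax1 ax2 ax3 ax4]] := htri.
have [hFL hj1 hj2 hFu] := hF.
have hbF : bilinear_op brF by case: hFL.
have hil : is_linear iota by case: hiota.
have [pi [hpi hpi1 hpi2 _]] := hFu F brF j2 j2 hFL hj2 hj2.
have pipi : forall x, pi (pi x) = pi x.
  have [p0 [_ _ _ p0u]] := hFu F brF j2 j2 hFL hj2 hj2.
  have e1 := p0u pi hpi hpi1 hpi2.
  have e2 := p0u (fun x => pi (pi x)) (hom_comp hpi hpi).
  have e3 : forall x, pi (pi x) = p0 x.
    apply: e2; first by move=> l; rewrite hpi1 hpi2.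
    by move=> l; rewrite !hpi2.
  by move=> x; rewrite e3 e1.
have [hpil hpib] := hpi.
pose vdF x y := brF (pi x) y.
pose dvF x y := - brF (pi y) x.
have aux1 : forall a b : F, a - b - a + b = 0.
  by move=> a b; rewrite -addrA (addrC (- a)) addrA subrK subrr.
have triF : is_Lie_tri vdF dvF brF.
  split; split.
  - split=> a x y z; rewrite /vdF; first by rewrite hpil hbF.1.
    by rewrite hbF.2.
  - split=> a x y z; rewrite /dvF; first by rewrite hbF.2 opprD scalerN.
    by rewrite hpil hbF.1 opprD scalerN.
  - exact: hbF.
  - by [].
  - exact: br_anti.
  - by move=> x1 x2 x3; rewrite /vdF hpib pipi (jac1 hFL) aux1.
  - by move=> x1 x2 x3; rewrite /vdF !hpib pipi.
  - move=> x1 x2 x3; rewrite /vdF (jac1 hFL (pi x1) x2 x3).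
    by rewrite (br_anti hFL (brF (pi x1) x3) x2) opprK aux1.
  - move=> x1 x2 x3.
    rewrite (br_anti hFL (brF x1 x2) x3) (br_anti hFL (brF x2 x3) x1).
    rewrite (br_anti hFL (brF x3 x1) x2) -!opprD.
    have [_ _ ->] := hFL.
    by rewrite oppr0.
have [g [[hgl hgvd hgdv hgpp] hgi _]] := huniv F vdF dvF brF j1 triF hj1.
have hppL : is_Lie pp.
  split; first exact: hbpp.
    by move=> x; apply: (two_zero hchar); rewrite {1}hppa.
  move=> x y z.
  rewrite (hppa x (pp y z)) (hppa y (pp z x)) (hppa z (pp x y)) -!opprD.
  by rewrite ax4 oppr0.
have hder : forall x y z, vd x (pp y z) = pp (vd x y) z + pp y (vd x z).
  move=> x y z; have := ax3 x y z.
  rewrite (hppa (vd x z) y) opprK addrAC => /eqP; rewrite subr_eq0 => /eqP.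
  by [].
have hcomm : forall x y w, vd (pp x y) w = vd x (vd y w) - vd y (vd x w).
  by move=> x y w; rewrite ax2; apply/eqP; rewrite -subr_eq0 opprB addrA addrAC ax1.
have hcomm' : forall x y w, vd (vd x y) w = vd x (vd y w) - vd y (vd x w).
  by move=> x y w; rewrite -ax2.
have hM := brM_Lie hL hppL hbvd hder hcomm hiota.
have [h [hh hh1 hh2 _]] := hFu _ _ _ _ hM (h1_hom hL hbvd hiota) (h2_hom brL iota hppL hbvd).
have idhom : is_Lie_hom brL brL id by [].
have [k0 [hk k1 k2 _]] := hFu L brL id id hL idhom idhom.
have hpiE : forall x, h (pi x) = (0, k0 x).
  have [q [_ _ _ qu]] := hFu _ _ _ _ hM (h2_hom brL iota hppL hbvd) (h2_hom brL iota hppL hbvd).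
  have e1 := qu (fun x => h (pi x)) (hom_comp hpi hh).
  have e2 := qu (fun x => (0, k0 x)) (h0_hom iota hppL hbvd hk).
  have E1 : forall x, h (pi x) = q x.
    by apply: e1 => l; rewrite ?hpi1 ?hpi2 hh2.
  have E2 : forall x, (0, k0 x) = q x.
    by apply: e2 => l; rewrite ?k1 ?k2.
  by move=> x; rewrite E1 E2.
have P8 : forall z w, vd (iota (k0 z)) w = vd (h z).1 w + vd (iota (h z).2) w.
  refine (lie_gen (P := fun z => forall w, vd (iota (k0 z)) w = vd (h z).1 w + vd (iota (h z).2) w) _ _ _ hF _ _ _).
  - move=> w; rewrite (lin0 hk.1) (lin0 hil) (lin0 hh.1) /=.
    by rewrite (lin0 hil) (br0l hbvd) addr0.
  - move=> x y Px Py w.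
    rewrite (linD hk.1) (linD hil) (brDl hbvd) Px Py (linD hh.1) /=.
    by rewrite (brDl hbvd) (linD hil) (brDl hbvd) addrACA.
  - move=> a x Px w.
    rewrite (linZ hk.1) (linZ hil) (brZl hbvd) Px (linZ hh.1) /=.
    by rewrite (brZl hbvd) (linZ hil) (brZl hbvd) scalerDr.
  - move=> x y Px Py w.
    rewrite hk.2 hiota.2 hcomm !Px !Py !(brDr hbvd).
    rewrite hh.2 /= /Dop (brDl hbvd) (brNl hbvd) (brDl hbvd) hiota.2 !hcomm !hcomm'.
    by rewrite ac8.
  - by move=> l w; rewrite k1 hh1 /= (lin0 hil) (br0l hbvd) addr0.
  - by move=> l w; rewrite k2 hh2 /= (br0l hbvd) add0r.
pose J := fun z => exists l, z = j1 l.
have gi0 : gen_ideal brF J 0 by move=> Q [Q0 _ _ _] _.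
have giD : forall x y, gen_ideal brF J x -> gen_ideal brF J y -> gen_ideal brF J (x + y).
  move=> x y Hx Hy Q hQ hJ; have [_ QD _ _] := hQ.
  exact: QD (Hx Q hQ hJ) (Hy Q hQ hJ).
have giZ : forall a x, gen_ideal brF J x -> gen_ideal brF J (a *: x).
  move=> a x Hx Q hQ hJ; have [_ _ QZ _] := hQ.
  exact: QZ (Hx Q hQ hJ).
have giN : forall x, gen_ideal brF J x -> gen_ideal brF J (- x).
  by move=> x Hx; rewrite -scaleN1r; apply: giZ.
have giB : forall x y, gen_ideal brF J y -> gen_ideal brF J (brF x y).
  move=> x y Hy Q hQ hJ; have [_ _ _ Qb] := hQ.
  exact: Qb (Hy Q hQ hJ).
have hI2 : forall y, gen_ideal brF J y -> (h y).2 = 0.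
  move=> y Hy; apply: (Hy (fun y => (h y).2 = 0)).
  - split.
    + by rewrite (lin0 hh.1).
    + by move=> a b Ha Hb; rewrite (linD hh.1) /= Ha Hb addr0.
    + by move=> a b Hb; rewrite (linZ hh.1) /= Hb scaler0.
    + by move=> a b Hb; rewrite hh.2 /= Hb (br0r hbL).
  - by move=> z [l ->]; rewrite hh1.
have gI : forall u, gen_ideal brF J (g u).
  refine (tri_gen (P := fun u => gen_ideal brF J (g u)) _ _ _ hU _ _ _ _).
  - by rewrite (lin0 hgl).
  - by move=> x y Hx Hy; rewrite (linD hgl); apply: giD.
  - by move=> a x Hx; rewrite (linZ hgl); apply: giZ.
  - by move=> x y Hx Hy; rewrite hgvd; apply: giB.
  - by move=> x y Hx Hy; rewrite hgdv /dvF; apply: giN; apply: giB.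
  - by move=> x y Hx Hy; rewrite hgpp; apply: giB.
  - by move=> l; rewrite hgi => Q _ hJ; apply: hJ; exists l.
pose r u := (h (g u)).1.
have rvd : forall x y, r (vd x y) = vd (r x) (r y).
  move=> x y; rewrite /r hgvd /vdF hh.2 hpiE /= /Dop.
  rewrite (br0l hbpp) add0r (hI2 _ (gI y)) (br0r hbvd) subr0 P8 (hI2 _ (gI x)).
  by rewrite (lin0 hil) (br0l hbvd) addr0.
have rpp : forall x y, r (pp x y) = pp (r x) (r y).
  move=> x y; rewrite /r hgpp hh.2 /= (hI2 _ (gI x)) (hI2 _ (gI y)) /Dop.
  by rewrite (lin0 hil) !(br0l hbvd) subr0 addr0.
have rl : is_linear r by move=> a x0 y0; rewrite /r hgl hh.1.
have rdv : forall x y, r (dv x y) = dv (r x) (r y).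
  by move=> x y; rewrite hdv (linN rl) rvd hdv.
have ri : forall l, r (iota l) = iota l by move=> l; rewrite /r hgi hh1.
have rid : forall u, r u = u.
  have [g0 [_ _ g0u]] := huniv U vd dv pp iota htri hiota.
  have E1 : forall u, r u = g0 u by apply: g0u.
  have E2 : forall u, u = g0 u by apply: (g0u id).
  by move=> u; rewrite E1 -E2.
exists g; split => //.
  by move=> x y e; rewrite -(rid x) -(rid y) /r e.
move=> y; split => [Hy | [u <-]]; last exact: gI u.
have Xall : forall x y, (exists u, g u = y) -> exists u, g u = brF x y.
  refine (lie_gen (P := fun x => forall y, (exists u, g u = y) -> exists u, g u = brF x y) _ _ _ hF _ _ _).
  - by move=> y0 _; exists 0; rewrite (lin0 hgl) (br0l hbF).
  - move=> x x' Hx Hx' y0 Hy0; have [u eu] := Hx y0 Hy0; have [v ev] := Hx' y0 Hy0.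
    by exists (u + v); rewrite (linD hgl) eu ev (brDl hbF).
  - move=> a x Hx y0 Hy0; have [u eu] := Hx y0 Hy0.
    by exists (a *: u); rewrite (linZ hgl) eu (brZl hbF).
  - move=> x x' Hx Hx' y0 Hy0; rewrite (jac1 hFL).
    have [u eu] := Hx' y0 Hy0; have [v ev] := Hx _ (ex_intro _ u eu).
    have [u2 eu2] := Hx y0 Hy0; have [v2 ev2] := Hx' _ (ex_intro _ u2 eu2).
    by exists (v - v2); rewrite (linB hgl) ev ev2.
  - by move=> l y0 [u <-]; exists (pp (iota l) u); rewrite hgpp hgi.
  - by move=> l y0 [u <-]; exists (vd (iota l) u); rewrite hgvd /vdF hgi hpi1.
apply: (Hy (fun y => exists u, g u = y)); last first.
  by move=> z [l ->]; exists (iota l); rewrite hgi.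
split.
- by exists 0; rewrite (lin0 hgl).
- by move=> a b [u <-] [v <-]; exists (u + v); rewrite (linD hgl).
- by move=> a b [u <-]; exists (a *: u); rewrite (linZ hgl).
- exact: Xall.
Qed.
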